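(* Every bounded orbit of the planar Stark problem $$\ddot x=-\frac{x}{r^3}+1,\qquad \ddot y=-\frac{y}{r^3},\qquad r=\sqrt{x^2+y^2},$$ is either a collision–ejection orbit on the negative $x$-axis, or it remains within the unit disc $\{|q|\le 1\}$ for all time.
   Context: A collision–ejection orbit on the negative $x$-axis is a solution moving on $\{(x,0):x<0\}$ which reaches the origin (collision) and, after regularization, is ejected back along the same half-line. *)

(* Defs.v *)
From Stdlib Require Import Reals.
From Coquelicot Require Import Coquelicot.
Open Scope R_scope.

Definition stark_r (x y : R) : R := sqrt (x ^ 2 + y ^ 2).

Definition stark_ax (x y : R) : R := - x / (stark_r x y) ^ 3 + 1.
Definition stark_ay (x y : R) : R := - y / (stark_r x y) ^ 3.

Definition collides (x y : R -> R) (t : R) : Prop := x t = 0 /\ y t = 0.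

(* A (regularized) solution of the planar Stark problem defined for all
   time t in R:
   - q = (x,y) is continuous;
   - away from collisions q is C^2-differentiable (with velocity (vx,vy))
     and satisfies the Stark equations;
   - collisions are isolated and, as in the Levi-Civita regularization,
     at a collision time t0 the orbit is ejected back along the same path:
     q (t0 + s) = q (t0 - s) for small s. *)
Definition stark_solution (x y : R -> R) : Prop :=
  (forall t, continuous x t /\ continuous y t) /\
  (exists vx vy : R -> R, forall t, ~ collides x y t ->
      is_derive x t (vx t) /\ is_derive y t (vy t) /\
      is_derive vx t (stark_ax (x t) (y t)) /\
      is_derive vy t (stark_ay (x t) (y t))) /\
  (forall t0, collides x y t0 ->
     exists eps, 0 < eps /\ forall s, 0 < Rabs s < eps ->
       ~ collides x y (t0 + s) /\
       x (t0 + s) = x (t0 - s) /\ y (t0 + s) = y (t0 - s)).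

Definition bounded_orbit (x y : R -> R) : Prop :=
  exists M, forall t, stark_r (x t) (y t) <= M.

Definition collision_ejection_neg_x_axis (x y : R -> R) : Prop :=
  (forall t, y t = 0 /\ x t <= 0) /\ (exists t, collides x y t).

(* Main.v *)
Require Import Defs.
From Stdlib Require Import Reals Nsatz Lra Classical.
From Coquelicot Require Import Coquelicot.
Open Scope R_scope.


Lemma cont_eps (f : R -> R) t : continuous f t ->
  forall eps, 0 < eps -> exists d, 0 < d /\ forall s, Rabs (s - t) < d -> Rabs (f s - f t) < eps.
Proof.
  intros Hc eps He.
  destruct (proj1 (filterlim_locally f (f t)) Hc (mkposreal eps He)) as [d Hd].
  exists d. split. apply cond_pos. intros s Hs. apply (Hd s). exact Hs.
Qed.

Lemma D_eq (f : R -> R) (t l l' : R) : is_derive f t l -> l = l' -> is_derive f t l'.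
Proof. intros; subst; auto. Qed.
Lemma D_plus (f g : R -> R) (t a b : R) : is_derive f t a -> is_derive g t b -> is_derive (fun s => f s + g s) t (a + b).
Proof. intros. apply (is_derive_plus f g); auto. Qed.
Lemma D_minus (f g : R -> R) (t a b : R) : is_derive f t a -> is_derive g t b -> is_derive (fun s => f s - g s) t (a - b).
Proof. intros. apply (is_derive_minus f g); auto. Qed.
Lemma D_mult (f g : R -> R) (t a b : R) : is_derive f t a -> is_derive g t b -> is_derive (fun s => f s * g s) t (a * g t + f t * b).
Proof. intros. apply (is_derive_mult f g); auto. intros; apply Rmult_comm. Qed.
Lemma D_inv (f : R -> R) (t a : R) : is_derive f t a -> f t <> 0 -> is_derive (fun s => / f s) t (- a / (f t ^ 2)).
Proof. intros. apply is_derive_inv; auto. Qed.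
Lemma D_const (c t : R) : is_derive (fun _ => c) t 0.
Proof. apply (is_derive_const (K:=R_AbsRing) (V:=R_NormedModule)). Qed.
Lemma D_sqrt (f : R -> R) (t a : R) : is_derive f t a -> 0 < f t -> is_derive (fun s => sqrt (f s)) t (a / (2 * sqrt (f t))).
Proof. intros. apply is_derive_sqrt; auto. Qed.


Definition ode (x y vx vy : R -> R) : Prop :=
  (forall t, continuous x t /\ continuous y t) /\
  (forall t, ~ collides x y t ->
      is_derive x t (vx t) /\ is_derive y t (vy t) /\
      is_derive vx t (stark_ax (x t) (y t)) /\
      is_derive vy t (stark_ay (x t) (y t))).

Definition rr (x y : R -> R) t := stark_r (x t) (y t).
Definition uu x y t := rr x y t + x t.
Definition HH (x y vx vy : R -> R) t := (vx t ^ 2 + vy t ^ 2) / 2 - / rr x y t - x t.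
Definition GG (x y vx vy : R -> R) t :=
  vy t * (x t * vy t - y t * vx t) - x t / rr x y t + y t ^ 2 / 2.
Definition DD (x y vx vy : R -> R) t := (x t * vx t + y t * vy t) / rr x y t + vx t.

Lemma nc_pos x y t : ~ collides x y t -> 0 < x t ^ 2 + y t ^ 2.
Proof.
  intro H. unfold collides in H.
  destruct (Req_dec (x t) 0) as [h1|h1].
  - assert (y t <> 0) by tauto. pose proof (Rsqr_pos_lt _ H0). unfold Rsqr in *. nra.
  - pose proof (Rsqr_pos_lt _ h1). unfold Rsqr in *. nra.
Qed.

Lemma pos_nc x y t : 0 < x t ^ 2 + y t ^ 2 -> ~ collides x y t.
Proof. intros H [h1 h2]. rewrite h1, h2 in H. lra. Qed.

Lemma rr_sq x y t : rr x y t ^ 2 = x t ^ 2 + y t ^ 2.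
Proof. unfold rr, stark_r. apply pow2_sqrt. nra. Qed.

Lemma rr_ge x y t : 0 <= rr x y t.
Proof. unfold rr, stark_r. apply sqrt_pos. Qed.

Lemma rr_pos x y t : ~ collides x y t -> 0 < rr x y t.
Proof. intro H. unfold rr, stark_r. apply sqrt_lt_R0. now apply nc_pos. Qed.

Lemma rr_absx x y t : Rabs (x t) <= rr x y t.
Proof.
  pose proof (rr_sq x y t). pose proof (rr_ge x y t).
  rewrite <- (Rabs_pos_eq (rr x y t)) by lra.
  apply Rsqr_le_abs_0. unfold Rsqr. nra.
Qed.

Lemma uu_ge x y t : 0 <= uu x y t.
Proof. unfold uu. pose proof (rr_absx x y t). pose proof (Rabs_maj2 (x t)). lra. Qed.

Lemma uu_le x y t : uu x y t <= 2 * rr x y t.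
Proof. unfold uu. pose proof (rr_absx x y t). pose proof (Rle_abs (x t)). lra. Qed.

Lemma uu_pos_nc x y t : 0 < uu x y t -> ~ collides x y t.
Proof. intros H [h1 h2]. unfold uu, rr, stark_r in H. rewrite h1, h2 in H.
  replace (0 ^ 2 + 0 ^ 2) with 0 in H by ring. rewrite sqrt_0 in H. lra. Qed.

Lemma uu_zero x y t : uu x y t = 0 -> y t = 0 /\ x t <= 0.
Proof.
  intro H. unfold uu in H. pose proof (rr_sq x y t). pose proof (rr_ge x y t).
  assert (rr x y t = - x t) by lra. rewrite H2 in H0. split; [|lra].
  assert (y t ^ 2 = 0) by nra. destruct (Req_dec (y t) 0) as [|hy]; auto.
  pose proof (Rsqr_pos_lt _ hy). unfold Rsqr in *. nra.
Qed.


Ltac dtac := repeat first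
  [ apply D_plus | apply D_minus | apply D_mult | apply D_inv | apply D_const
  | apply is_derive_pow ].

Lemma rr_deriv x y vx vy t : ode x y vx vy -> ~ collides x y t ->
  is_derive (rr x y) t ((x t * vx t + y t * vy t) / rr x y t).
Proof.
  intros [_ Hd] Hc. destruct (Hd t Hc) as (h1 & h2 & _).
  pose proof (rr_pos x y t Hc) as Hp.
  unfold rr at 1, stark_r.
  eapply D_eq. apply D_sqrt. apply D_plus; apply is_derive_pow; eauto.
  now apply nc_pos.
  unfold rr, stark_r in *. simpl in *. field. lra.
Qed.

Lemma D_divc (f : R -> R) (t a c : R) : is_derive f t a -> is_derive (fun s => f s / c) t (a / c).
Proof. intro. unfold Rdiv. eapply D_eq. apply D_mult. eauto. apply D_const. simpl. ring. Qed.
Lemma D_div (f g : R -> R) (t a b : R) : is_derive f t a -> is_derive g t b -> g t <> 0 ->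
  is_derive (fun s => f s / g s) t ((a * g t - f t * b) / g t ^ 2).
Proof. intros. unfold Rdiv. eapply D_eq. apply D_mult. eauto. apply D_inv; eauto. simpl. field. auto. Qed.

Ltac dtac2 := repeat first
  [ apply D_plus | apply D_minus | apply D_div | apply D_divc | apply D_mult | apply D_inv | apply D_const
  | apply is_derive_pow ].

Lemma HH_deriv x y vx vy t : ode x y vx vy -> ~ collides x y t ->
  is_derive (HH x y vx vy) t 0.
Proof.
  intros Ho Hc. pose proof Ho as [_ Hd]. destruct (Hd t Hc) as (h1 & h2 & h3 & h4).
  pose proof (rr_pos x y t Hc) as Hp. pose proof (rr_deriv _ _ _ _ _ Ho Hc) as hr.
  pose proof (rr_sq x y t) as hs.
  unfold HH. eapply D_eq. apply D_minus. apply D_minus. apply D_divc.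
  apply D_plus; apply is_derive_pow; eauto. apply D_inv; [exact hr | lra]. exact h1.
  unfold stark_ax, stark_ay in *. change (stark_r (x t) (y t)) with (rr x y t) in *.
  set (r := rr x y t) in *. clearbody r.
  simpl. field_simplify_eq. nsatz. lra.
Qed.

Lemma pow_red (r s : R) n : r ^ 2 = s -> r ^ (S (S n)) = r ^ n * s.
Proof. intro h. rewrite <- h. simpl. ring. Qed.

Ltac finalg := match goal with hs : ?r ^ 2 = _ |- _ =>
  repeat rewrite (pow_red _ _ _ hs); ring end.

Lemma GG_deriv x y vx vy t : ode x y vx vy -> ~ collides x y t ->
  is_derive (GG x y vx vy) t 0.
Proof.
  intros Ho Hc. pose proof Ho as [_ Hd]. destruct (Hd t Hc) as (h1 & h2 & h3 & h4).
  pose proof (rr_pos x y t Hc) as Hp. pose proof (rr_deriv _ _ _ _ _ Ho Hc) as hr.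
  pose proof (rr_sq x y t) as hs.
  unfold GG. eapply D_eq. apply D_plus. apply D_minus. apply D_mult. exact h4.
  apply D_minus; apply D_mult; eauto.
  apply D_div; [exact h1 | exact hr | lra].
  apply D_divc. apply is_derive_pow; eauto.
  unfold stark_ax, stark_ay in *. change (stark_r (x t) (y t)) with (rr x y t) in *.
  set (r := rr x y t) in *. clearbody r.
  set (X := x t) in *. set (Y := y t) in *. set (VX := vx t) in *. set (VY := vy t) in *.
  clearbody X Y VX VY.
  simpl. field_simplify_eq. finalg. lra.
Qed.

Definition DDd (x y vx vy : R -> R) t :=
  let r := rr x y t in let P := x t * vx t + y t * vy t in
  (vx t ^ 2 + vy t ^ 2 - / r + x t) / r - P ^ 2 / r ^ 3 + 1 - x t / r ^ 3.

Lemma DD_deriv x y vx vy t : ode x y vx vy -> ~ collides x y t ->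
  is_derive (DD x y vx vy) t (DDd x y vx vy t).
Proof.
  intros Ho Hc. pose proof Ho as [_ Hd]. destruct (Hd t Hc) as (h1 & h2 & h3 & h4).
  pose proof (rr_pos x y t Hc) as Hp. pose proof (rr_deriv _ _ _ _ _ Ho Hc) as hr.
  pose proof (rr_sq x y t) as hs.
  unfold DD. eapply D_eq. apply D_plus. apply D_div.
  apply D_plus; apply D_mult; eauto. exact hr. lra. exact h3.
  unfold DDd, stark_ax, stark_ay in *. change (stark_r (x t) (y t)) with (rr x y t) in *.
  set (r := rr x y t) in *. clearbody r.
  set (X := x t) in *. set (Y := y t) in *. set (VX := vx t) in *. set (VY := vy t) in *.
  clearbody X Y VX VY.
  simpl. field_simplify_eq. finalg. lra.
Qed.

Ltac genall x y vx vy t :=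
  change (stark_r (x t) (y t)) with (rr x y t) in *;
  set (X := x t) in *; set (Y := y t) in *; set (VX := vx t) in *; set (VY := vy t) in *;
  set (r := rr x y t) in *; clearbody X Y VX VY r.

Lemma key_rel x y vx vy t : ~ collides x y t ->
  (DD x y vx vy t * rr x y t) ^ 2 =
  4 * uu x y t * ((1 - GG x y vx vy t) / 2 + HH x y vx vy t * uu x y t / 2 + uu x y t ^ 2 / 4).
Proof.
  intros Hc. pose proof (rr_pos x y t Hc) as Hp. pose proof (rr_sq x y t) as hs.
  unfold DD, GG, HH, uu. genall x y vx vy t.
  field_simplify_eq. finalg. lra.
Qed.

Lemma hill x y vx vy t : ~ collides x y t ->
  uu x y t + HH x y vx vy t >= rr x y t - / rr x y t.
Proof.
  intros Hc. unfold uu, HH. pose proof (pow2_ge_0 (vx t)). pose proof (pow2_ge_0 (vy t)). lra.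
Qed.

Lemma DDd_pos_rel x y vx vy t : ~ collides x y t -> DD x y vx vy t = 0 -> 0 < uu x y t ->
  DDd x y vx vy t * rr x y t ^ 2 = uu x y t * (uu x y t + HH x y vx vy t).
Proof.
  intros Hc HD Hu. pose proof (rr_pos x y t Hc) as Hp. pose proof (rr_sq x y t) as hs.
  unfold DD, DDd, HH, uu in *. genall x y vx vy t.
  assert (HV : VX = - Y * VY / (r + X)).
  { assert (HD2 : X*VX+Y*VY + r*VX = ((X * VX + Y * VY) / r + VX) * r) by (field; lra).
    rewrite HD in HD2. field_simplify_eq; [|lra]. nra. }
  subst VX. field_simplify_eq. finalg. lra.
Qed.


Lemma real_ind (a b : R) (Q : R -> Prop) :
  a <= b -> Q a ->
  (forall t, a < t <= b -> (forall s, a <= s < t -> Q s) -> Q t) ->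
  (forall t, a <= t < b -> (forall s, a <= s <= t -> Q s) ->
     exists e, 0 < e /\ forall s, t < s < t + e -> Q s) ->
  forall t, a <= t <= b -> Q t.
Proof.
  intros Hab Qa H2 H3.
  set (E := fun t => a <= t <= b /\ forall s, a <= s <= t -> Q s).
  assert (Eb : bound E). { exists b. intros z [Hz _]. lra. }
  assert (Ea : exists z, E z). { exists a. split. lra. intros s Hs. replace s with a by lra. auto. }
  destruct (completeness E Eb Ea) as [c [Hub Hlub]].
  assert (Hac : a <= c). { apply Hub. split. lra. intros s Hs. replace s with a by lra. auto. }
  assert (Hcb : c <= b). { apply Hlub. intros z [Hz _]. lra. }
  assert (Hbelow : forall s, a <= s < c -> Q s).
  { intros s Hs. apply NNPP. intro HQ.
    assert (is_upper_bound E s).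
    { intros z [Hz Hz2]. destruct (Rle_dec z s) as [|Hn]; auto.
      exfalso. apply HQ. apply Hz2. lra. }
    assert (c <= s) by (apply Hlub; auto). lra. }
  assert (Qc : Q c).
  { destruct (Req_dec c a) as [->|Hne]; auto. apply H2. lra. auto. }
  assert (Ec : forall s, a <= s <= c -> Q s).
  { intros s Hs. destruct (Req_dec s c) as [->|]; auto. apply Hbelow. lra. }
  assert (Hcb2 : c = b).
  { destruct (Req_dec c b) as [|Hne]; auto. exfalso.
    destruct (H3 c) as [e [He He2]]. lra. auto.
    set (t' := Rmin (c + e / 2) b).
    assert (E t').
    { split. split. unfold t'. apply Rmin_glb; lra. unfold t'. apply Rmin_r.
      intros s Hs. destruct (Rle_dec s c). apply Ec. lra. apply He2.
      split. lra. assert (t' <= c + e/2) by apply Rmin_l. lra. }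
    assert (t' <= c) by (apply Hub; auto).
    unfold t' in H0. revert H0. apply Rmin_case; lra. }
  subst c. intros t Ht. apply Ec. lra.
Qed.

Lemma der_cont (f : R -> R) t l : is_derive f t l -> continuity_pt f t.
Proof.
  intro H. apply continuity_pt_filterlim. apply (ex_derive_continuous f t). exists l. exact H.
Qed.

Lemma mvt_lb (f df : R -> R) (a b c : R) : a <= b ->
  (forall s, a <= s <= b -> is_derive f s (df s)) ->
  (forall s, a <= s <= b -> c <= df s) -> c * (b - a) <= f b - f a.
Proof.
  intros Hab Hd Hc. destruct (MVT_gen f a b df) as [z [Hz Heq]].
  - intros s Hs. rewrite Rmin_left in Hs by lra. rewrite Rmax_right in Hs by lra. apply Hd. lra.
  - intros s Hs. rewrite Rmin_left in Hs by lra. rewrite Rmax_right in Hs by lra.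
    eapply der_cont. apply Hd. lra.
  - rewrite Rmin_left in Hz by lra. rewrite Rmax_right in Hz by lra.
    rewrite Heq. apply Rmult_le_compat_r. lra. apply Hc. lra.
Qed.

Lemma mvt_ub (f df : R -> R) (a b c : R) : a <= b ->
  (forall s, a <= s <= b -> is_derive f s (df s)) ->
  (forall s, a <= s <= b -> df s <= c) -> f b - f a <= c * (b - a).
Proof.
  intros Hab Hd Hc. destruct (MVT_gen f a b df) as [z [Hz Heq]].
  - intros s Hs. rewrite Rmin_left in Hs by lra. rewrite Rmax_right in Hs by lra. apply Hd. lra.
  - intros s Hs. rewrite Rmin_left in Hs by lra. rewrite Rmax_right in Hs by lra.
    eapply der_cont. apply Hd. lra.
  - rewrite Rmin_left in Hz by lra. rewrite Rmax_right in Hz by lra.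
    rewrite Heq. apply Rmult_le_compat_r. lra. apply Hc. lra.
Qed.

Lemma const_int (f : R -> R) (a b : R) : a <= b ->
  (forall s, a <= s <= b -> is_derive f s 0) -> f b = f a.
Proof.
  intros Hab Hd.
  pose proof (mvt_lb f (fun _ => 0) a b 0 Hab Hd (fun s _ => Rle_refl 0)).
  pose proof (mvt_ub f (fun _ => 0) a b 0 Hab Hd (fun s _ => Rle_refl 0)). lra.
Qed.

Lemma cont_lim_ge (f : R -> R) (a t m : R) : a < t -> continuity_pt f t ->
  (forall s, a <= s < t -> m <= f s) -> m <= f t.
Proof.
  intros Hat Hc H. apply Rnot_lt_le. intro Hlt.
  assert (Hc' : continuous f t) by (apply continuity_pt_filterlim; auto).
  destruct (cont_eps f t Hc' (m - f t)) as [d [Hd Hd2]]. lra.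
  set (s := Rmax a (t - d / 2)).
  assert (a <= s < t). { unfold s. apply Rmax_case_strong; intros; lra. }
  assert (Rabs (s - t) < d). { unfold s. apply Rmax_case_strong; intros; rewrite Rabs_left; lra. }
  specialize (Hd2 s H1). specialize (H s H0).
  pose proof (Rle_abs (f s - f t)). lra.
Qed.


Lemma rr_cont x y vx vy t : ode x y vx vy -> continuity_pt (rr x y) t.
Proof.
  intros [Hc _]. destruct (Hc t) as [hx hy].
  apply continuity_pt_filterlim in hx. apply continuity_pt_filterlim in hy.
  assert (H1 : continuity_pt (fun s => x s * x s + y s * y s) t).
  { apply continuity_pt_plus; apply continuity_pt_mult; auto. }
  assert (H2 : continuity_pt (comp sqrt (fun s => x s * x s + y s * y s)) t).
  { apply continuity_pt_comp; auto. apply continuity_pt_sqrt. nra. }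
  eapply continuity_pt_ext; [|exact H2]. intro s. unfold comp, rr, stark_r. f_equal. ring.
Qed.

Lemma uu_cont x y vx vy t : ode x y vx vy -> continuity_pt (uu x y) t.
Proof.
  intros Ho. pose proof (rr_cont x y vx vy t Ho). destruct Ho as [Hc _]. destruct (Hc t) as [hx _].
  unfold uu. apply continuity_pt_plus; auto. apply continuity_pt_filterlim. exact hx.
Qed.

Lemma uu_deriv x y vx vy t : ode x y vx vy -> ~ collides x y t ->
  is_derive (uu x y) t (DD x y vx vy t).
Proof.
  intros Ho Hc. pose proof (rr_deriv _ _ _ _ _ Ho Hc). destruct Ho as [_ Hd].
  destruct (Hd t Hc) as [h1 _]. unfold uu, DD. apply D_plus; auto.
Qed.

Lemma DD_cont x y vx vy t : ode x y vx vy -> ~ collides x y t -> continuity_pt (DD x y vx vy) t.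
Proof. intros. eapply der_cont. apply DD_deriv; auto. Qed.

Lemma HH_cont x y vx vy t : ode x y vx vy -> ~ collides x y t -> continuity_pt (HH x y vx vy) t.
Proof. intros. eapply der_cont. apply HH_deriv; auto. Qed.

Lemma cont_pos_nbhd (f : R -> R) t : continuity_pt f t -> 0 < f t ->
  exists e, 0 < e /\ forall s, Rabs (s - t) < e -> 0 < f s.
Proof.
  intros Hc Hp. assert (Hc' : continuous f t) by (apply continuity_pt_filterlim; auto).
  destruct (cont_eps f t Hc' (f t)) as [d [Hd Hd2]]; auto.
  exists d. split; auto. intros s Hs. specialize (Hd2 s Hs).
  pose proof (Rabs_def2 _ _ Hd2). lra.
Qed.

Lemma escape_fwd x y vx vy M t1 : ode x y vx vy -> (forall t, rr x y t <= M) ->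
  0 < uu x y t1 -> 0 < uu x y t1 + HH x y vx vy t1 -> 0 < DD x y vx vy t1 -> False.
Proof.
  intros Ho HM Hu1 Huh HD1.
  set (u1 := uu x y t1) in *. set (h := HH x y vx vy t1) in *. set (g := GG x y vx vy t1) in *.
  set (c := (1 - g) / 2 + h * u1 / 2 + u1 ^ 2 / 4).
  assert (Hnc1 : ~ collides x y t1) by (apply uu_pos_nc; auto).
  assert (Hr1 : 0 < rr x y t1) by (apply rr_pos; auto).
  assert (Hc : 0 < c).
  { assert (Hrel : (DD x y vx vy t1 * rr x y t1) ^ 2 = 4 * u1 * c)
      by (unfold c, u1, h, g; apply key_rel; auto).
    assert (0 < (DD x y vx vy t1 * rr x y t1) ^ 2).
    { apply pow_lt. apply Rmult_lt_0_compat; auto. }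
    rewrite Hrel in H. clear Hrel.
    apply (Rmult_lt_reg_l (4 * u1)). lra. rewrite Rmult_0_r. lra. }
  assert (Hconst : forall t, t1 <= t -> (forall s, t1 <= s <= t -> ~ collides x y s) ->
            HH x y vx vy t = h /\ GG x y vx vy t = g).
  { intros t Ht Hs. split.
    - apply const_int; auto. intros s Hs'. apply HH_deriv; auto.
    - apply const_int; auto. intros s Hs'. apply GG_deriv; auto. }
  assert (Hkey : forall t, t1 <= t -> (forall s, t1 <= s <= t -> u1 <= uu x y s) ->
            4 * u1 * c <= (DD x y vx vy t * rr x y t) ^ 2).
  { intros t Ht Hs.
    assert (Hnc : forall s, t1 <= s <= t -> ~ collides x y s).
    { intros s Hs'. apply uu_pos_nc. specialize (Hs s Hs'). lra. }
    destruct (Hconst t Ht Hnc) as [eh eg].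
    rewrite (key_rel x y vx vy t (Hnc t (conj Ht (Rle_refl t)))). rewrite eh, eg.
    assert (Hut : u1 <= uu x y t) by (apply Hs; lra).
    set (ut := uu x y t) in *. unfold c.
    assert (0 <= (ut - u1) * (h / 2 + (ut + u1) / 4)).
    { apply Rmult_le_pos; lra. }
    assert (Hct : c <= (1 - g) / 2 + h * ut / 2 + ut ^ 2 / 4).
    { unfold c. replace ((1 - g) / 2 + h * ut / 2 + ut ^ 2 / 4) with
        ((1 - g) / 2 + h * u1 / 2 + u1 ^ 2 / 4 + (ut - u1) * (h / 2 + (ut + u1) / 4)) by (clear; field).
      lra. }
    fold c. apply Rmult_le_compat; lra. }
  assert (HQ : forall T, t1 <= T -> forall t, t1 <= t <= T ->
             u1 <= uu x y t /\ 0 < DD x y vx vy t).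
  { intros T HT. apply real_ind; auto.
    - split. unfold u1; lra. auto.
    - intros t Ht HQs.
      assert (Hut : u1 <= uu x y t).
      { apply (cont_lim_ge (uu x y) t1 t u1). lra. eapply uu_cont; eauto.
        intros s Hs. apply HQs; auto. }
      assert (Hall : forall s, t1 <= s <= t -> u1 <= uu x y s).
      { intros s Hs. destruct (Req_dec s t) as [->|]; auto. apply HQs. lra. }
      split; auto.
      assert (Hnct : ~ collides x y t) by (apply uu_pos_nc; lra).
      assert (HD0 : 0 <= DD x y vx vy t).
      { apply (cont_lim_ge (DD x y vx vy) t1 t 0). lra. apply DD_cont; auto.
        intros s Hs. left. apply HQs; auto. }
      pose proof (Hkey t ltac:(lra) Hall).
      destruct HD0 as [|HD0]; auto. rewrite <- HD0 in H. nra.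
    - intros t Ht HQs.
      destruct (HQs t (conj (proj1 Ht) (Rle_refl t))) as [Hut HDt].
      assert (Hnct : ~ collides x y t) by (apply uu_pos_nc; lra).
      destruct (cont_pos_nbhd _ t (DD_cont x y vx vy t Ho Hnct) HDt) as [e1 [He1 He1']].
      destruct (cont_pos_nbhd _ t (uu_cont x y vx vy t Ho) ltac:(lra)) as [e2 [He2 He2']].
      exists (Rmin e1 e2). split. apply Rmin_glb_lt; auto.
      intros s Hs. pose proof (Rmin_l e1 e2). pose proof (Rmin_r e1 e2).
      assert (Hin : forall z, t <= z <= s -> Rabs (z - t) < e1 /\ Rabs (z - t) < e2).
      { intros z Hz. rewrite Rabs_pos_eq by lra. lra. }
      split; [|apply He1'; apply Hin; lra].
      assert (0 * (s - t) <= uu x y s - uu x y t).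
      { apply (mvt_lb (uu x y) (DD x y vx vy)). lra.
        intros z Hz. apply uu_deriv; auto. apply uu_pos_nc. apply He2'. apply Hin; auto.
        intros z Hz. left. apply He1'. apply Hin; auto. }
      lra. }
  assert (HMpos : 0 < M) by (specialize (HM t1); lra).
  set (K := 4 * u1 * c / M ^ 2).
  assert (HK : 0 < K) by (unfold K; apply Rdiv_lt_0_compat; [nra | apply pow_lt; lra]).
  set (al := Rmin 1 K).
  assert (Hal : 0 < al) by (unfold al; apply Rmin_glb_lt; lra).
  assert (Hal1 : al <= 1) by apply Rmin_l.
  assert (Hal2 : al <= K) by apply Rmin_r.
  set (T := t1 + (2 * M + 1) / al).
  assert (HT : t1 <= T).
  { unfold T. assert (0 < (2 * M + 1) / al) by (apply Rdiv_lt_0_compat; lra). lra. }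
  assert (Hgrow : al * (T - t1) <= uu x y T - uu x y t1).
  { apply (mvt_lb (uu x y) (DD x y vx vy)); auto.
    - intros s Hs. apply uu_deriv; auto. apply uu_pos_nc.
      destruct (HQ T HT s Hs). unfold u1 in *; lra.
    - intros s Hs. destruct (HQ T HT s Hs) as [Hus HDs].
      assert (Hall : forall z, t1 <= z <= s -> u1 <= uu x y z).
      { intros z Hz. apply (HQ T HT z). lra. }
      pose proof (Hkey s (proj1 Hs) Hall) as Hk.
      pose proof (HM s). pose proof (rr_ge x y s).
      set (D := DD x y vx vy s) in *. set (r := rr x y s) in *.
      assert (HD2 : K <= D ^ 2).
      { assert (HM2 : 0 < M ^ 2) by (apply pow_lt; lra).
        assert (D ^ 2 * r ^ 2 <= D ^ 2 * M ^ 2).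
        { apply Rmult_le_compat_l. apply pow2_ge_0. apply pow_incr. lra. }
        unfold K. apply (Rmult_le_reg_r (M ^ 2)); auto.
        unfold Rdiv. rewrite Rmult_assoc, Rinv_l, Rmult_1_r by lra.
        rewrite Rpow_mult_distr in Hk. lra. }
      assert (al * al <= D * D) by nra.
      nra. }
  assert (al * (T - t1) = 2 * M + 1) by (unfold T; field; lra).
  pose proof (uu_le x y T). pose proof (HM T). unfold u1 in *. lra.
Qed.


Definition rv (f : R -> R) := fun t => f (- t).
Definition rvv (f : R -> R) := fun t => - f (- t).

Lemma D_neg (t : R) : is_derive (fun s : R => - s) t (-1).
Proof. auto_derive; auto. Qed.

Lemma D_rev (f : R -> R) t l : is_derive f (- t) l -> is_derive (rv f) t (- l).
Proof.
  intro H. unfold rv. eapply D_eq. apply (is_derive_comp f (fun s => - s)). exact H.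
  apply D_neg. simpl. unfold scal; simpl. unfold mult; simpl. ring.
Qed.


Lemma cont_rev (f : R -> R) t : continuous f (- t) -> continuous (rv f) t.
Proof.
  intro H. unfold rv. apply (continuous_comp (fun s : R => - s) f).
  apply (ex_derive_continuous (fun s : R => - s)). exists (-1). apply D_neg. exact H.
Qed.

Lemma D_opp (f : R -> R) t l : is_derive f t l -> is_derive (fun s => - f s) t (- l).
Proof. intro H. apply (is_derive_opp f). exact H. Qed.

Lemma ode_rev x y vx vy : ode x y vx vy -> ode (rv x) (rv y) (rvv vx) (rvv vy).
Proof.
  intros [Hc Hd]. split.
  - intro t. destruct (Hc (- t)). split; apply cont_rev; auto.
  - intros t Hnc. assert (Hnc' : ~ collides x y (- t)) by (intros [h1 h2]; apply Hnc; split; auto).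
    destruct (Hd (- t) Hnc') as (h1 & h2 & h3 & h4).
    split; [|split; [|split]].
    + unfold rvv. apply D_rev; auto.
    + unfold rvv. apply D_rev; auto.
    + unfold rvv. eapply D_eq. apply (D_opp (rv vx)). apply D_rev. exact h3.
      unfold rv. ring.
    + unfold rvv. eapply D_eq. apply (D_opp (rv vy)). apply D_rev. exact h4.
      unfold rv. ring.
Qed.

Lemma rr_rev x y t : rr (rv x) (rv y) t = rr x y (- t).
Proof. reflexivity. Qed.
Lemma uu_rev x y t : uu (rv x) (rv y) t = uu x y (- t).
Proof. reflexivity. Qed.
Lemma HH_rev x y vx vy t : HH (rv x) (rv y) (rvv vx) (rvv vy) t = HH x y vx vy (- t).
Proof. unfold HH. rewrite rr_rev. unfold rvv, rv. cbv beta. rewrite <- !Rsqr_pow2, <- !Rsqr_neg. reflexivity. Qed.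
Lemma DD_rev x y vx vy t : DD (rv x) (rv y) (rvv vx) (rvv vy) t = - DD x y vx vy (- t).
Proof. unfold DD. rewrite rr_rev. unfold rvv, rv. cbv beta. unfold Rdiv. ring. Qed.

Lemma no_escape x y vx vy M t : ode x y vx vy -> (forall t, rr x y t <= M) ->
  0 < uu x y t -> 0 < uu x y t + HH x y vx vy t -> False.
Proof.
  intros Ho HM Hu Huh.
  assert (Hnc : ~ collides x y t) by (apply uu_pos_nc; auto).
  destruct (Rtotal_order (DD x y vx vy t) 0) as [Hneg | [Hz | Hpos]].
  - apply (escape_fwd (rv x) (rv y) (rvv vx) (rvv vy) M (- t)).
    + apply ode_rev; auto.
    + intro s. rewrite rr_rev. auto.
    + rewrite uu_rev, Ropp_involutive. auto.
    + rewrite uu_rev, HH_rev, Ropp_involutive. auto.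
    + rewrite DD_rev, Ropp_involutive. lra.
  - assert (Hr : 0 < rr x y t) by (apply rr_pos; auto).
    pose proof (DDd_pos_rel x y vx vy t Hnc Hz Hu) as Hrel.
    assert (Hd : 0 < DDd x y vx vy t).
    { assert (0 < uu x y t * (uu x y t + HH x y vx vy t)) by (apply Rmult_lt_0_compat; auto).
      rewrite <- Hrel in H. assert (0 < rr x y t ^ 2) by (apply pow_lt; auto).
      destruct (Rle_or_lt (DDd x y vx vy t) 0); auto. nra. }
    pose proof (DD_deriv x y vx vy t Ho Hnc) as HDd.
    apply is_derive_Reals in HDd.
    destruct (HDd (DDd x y vx vy t / 2)) as [del Hdel]. lra.
    assert (Hc1 : continuity_pt (fun s => uu x y s + HH x y vx vy s) t).
    { apply continuity_pt_plus. eapply uu_cont; eauto. apply HH_cont; auto. }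
    destruct (cont_pos_nbhd _ t Hc1 Huh) as [e1 [He1 He1']].
    destruct (cont_pos_nbhd _ t (uu_cont x y vx vy t Ho) Hu) as [e2 [He2 He2']].
    set (hh := Rmin del (Rmin e1 e2) / 2).
    assert (Hdp : 0 < del) by apply cond_pos.
    assert (Hhpos : 0 < hh) by (unfold hh; apply Rdiv_lt_0_compat; [repeat apply Rmin_glb_lt|]; lra).
    assert (Hhd : hh < del /\ hh < e1 /\ hh < e2).
    { unfold hh. pose proof (Rmin_l del (Rmin e1 e2)). pose proof (Rmin_r del (Rmin e1 e2)).
      pose proof (Rmin_l e1 e2). pose proof (Rmin_r e1 e2). lra. }
    assert (Habs : Rabs hh < del) by (rewrite Rabs_pos_eq; lra).
    specialize (Hdel hh ltac:(lra) Habs).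
    rewrite Hz in Hdel.
    assert (Hq : DDd x y vx vy t / 2 < (DD x y vx vy (t + hh) - 0) / hh).
    { pose proof (Rabs_def2 _ _ Hdel). lra. }
    assert (HDp : 0 < DD x y vx vy (t + hh)).
    { assert (0 < (DD x y vx vy (t + hh) - 0) / hh) by lra.
      apply (Rmult_lt_compat_r hh) in H; auto. unfold Rdiv in H.
      rewrite Rmult_assoc, Rinv_l, Rmult_0_l in H by lra. lra. }
    assert (Hin : Rabs (t + hh - t) < e1 /\ Rabs (t + hh - t) < e2).
    { replace (t + hh - t) with hh by ring. rewrite Rabs_pos_eq; lra. }
    apply (escape_fwd x y vx vy M (t + hh)); auto.
    apply He2'. tauto. apply He1'. tauto.
  - apply (escape_fwd x y vx vy M t); auto.
Qed.


Definition coll_clause (x y : R -> R) : Prop :=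
  forall t0, collides x y t0 ->
     exists eps, 0 < eps /\ forall s, 0 < Rabs s < eps ->
       ~ collides x y (t0 + s) /\
       x (t0 + s) = x (t0 - s) /\ y (t0 + s) = y (t0 - s).

Lemma coll_rev x y : coll_clause x y -> coll_clause (rv x) (rv y).
Proof.
  intros H t0 Hc. destruct (H (- t0)) as [eps [He H2]].
  { destruct Hc as [h1 h2]. unfold rv in *. split; auto. }
  exists eps. split; auto. intros s Hs.
  assert (Hs' : 0 < Rabs (- s) < eps) by (rewrite Rabs_Ropp; auto).
  destruct (H2 (- s) Hs') as (h1 & h2 & h3). unfold rv, collides. cbv beta.
  replace (- (t0 + s)) with (- t0 + - s) by ring.
  replace (- (t0 - s)) with (- t0 - - s) by ring.
  split; [|split; auto].
  intros [k1 k2]. apply h1. split; auto.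
Qed.

Lemma uu_vals x y t t' : x t = x t' -> y t = y t' -> uu x y t = uu x y t'.
Proof. intros h1 h2. unfold uu, rr, stark_r. rewrite h1, h2. reflexivity. Qed.

Lemma deriv_loc_zero (f : R -> R) p l e : 0 < e -> is_derive f p l ->
  (forall z, Rabs (z - p) < e -> f z = 0) -> l = 0.
Proof.
  intros He Hd Hz.
  assert (H1 : is_derive (fun _ => 0) p l).
  { apply (is_derive_ext_loc f). exists (mkposreal e He). intros z Hb. apply Hz. exact Hb. exact Hd. }
  pose proof (is_derive_unique _ _ _ H1). pose proof (is_derive_unique _ _ _ (D_const 0 p)).
  rewrite H in H0. auto.
Qed.

Lemma cont_lim_le (f : R -> R) (a t m : R) : a < t -> continuity_pt f t ->
  (forall s, a <= s < t -> f s <= m) -> f t <= m.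
Proof.
  intros Hat Hc H.
  assert (- m <= - f t).
  { apply (cont_lim_ge (fun s => - f s) a t (- m)); auto.
    apply continuity_pt_opp; auto. intros s Hs. specialize (H s Hs). lra. }
  lra.
Qed.

Lemma forward_zero x y vx vy M t1 d : ode x y vx vy -> (forall t, rr x y t <= M) ->
  coll_clause x y -> 0 < d -> (forall s, t1 - d < s <= t1 -> uu x y s = 0) ->
  forall t, t1 <= t -> uu x y t = 0.
Proof.
  intros Ho HM Hcc Hd H0 T HT.
  apply (real_ind t1 T (fun t => uu x y t = 0)); auto.
  - apply H0. lra.
  - intros t Ht HQ. apply Rle_antisym.
    + apply (cont_lim_le (uu x y) t1 t 0). lra. eapply uu_cont; eauto.
      intros s Hs. rewrite HQ; auto. lra.
    + apply uu_ge.
  - intros t Ht HQ.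
    assert (Z : forall s, t1 - d < s <= t -> uu x y s = 0).
    { intros s Hs. destruct (Rle_dec s t1). apply H0. lra. apply HQ. lra. }
    destruct (classic (collides x y t)) as [Hc | Hnc].
    + destruct (Hcc t Hc) as [eps [He He2]].
      exists (Rmin eps d). split. apply Rmin_glb_lt; auto.
      intros s Hs. pose proof (Rmin_l eps d). pose proof (Rmin_r eps d).
      assert (Hsg : 0 < Rabs (s - t) < eps) by (rewrite Rabs_pos_eq; lra).
      destruct (He2 (s - t) Hsg) as (_ & k1 & k2).
      replace (t + (s - t)) with s in k1, k2 by ring.
      rewrite (uu_vals x y s (t - (s - t)) k1 k2). apply Z. lra.
    + assert (Hr : 0 < rr x y t) by (apply rr_pos; auto).
      destruct (cont_pos_nbhd _ t (rr_cont x y vx vy t Ho) Hr) as [e0 [He0 He0']].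
      set (e := Rmin e0 d).
      assert (He : 0 < e) by (apply Rmin_glb_lt; auto).
      assert (He1 : e <= e0) by apply Rmin_l. assert (He2 : e <= d) by apply Rmin_r.
      assert (NC : forall z, Rabs (z - t) < e0 -> ~ collides x y z).
      { intros z Hz [k1 k2]. specialize (He0' z Hz). unfold rr, stark_r in He0'.
        rewrite k1, k2 in He0'. replace (0 ^ 2 + 0 ^ 2) with 0 in He0' by ring.
        rewrite sqrt_0 in He0'. lra. }
      set (p := t - e / 2).
      assert (Hyz : forall z, Rabs (z - p) < e / 2 -> y z = 0).
      { intros z Hz. apply (uu_zero x y z). apply Z.
        pose proof (Rabs_def2 _ _ Hz). unfold p in *. lra. }
      assert (Hncp : ~ collides x y p).
      { apply NC. unfold p. replace (t - e / 2 - t) with (- (e / 2)) by ring.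
        rewrite Rabs_Ropp, Rabs_pos_eq; lra. }
      assert (Hvy : vy p = 0).
      { destruct Ho as [_ Hd']. destruct (Hd' p Hncp) as (_ & h2 & _).
        apply (deriv_loc_zero y p (vy p) (e / 2)); auto. lra. }
      assert (Hup : uu x y p = 0) by (apply Z; unfold p; lra).
      assert (HGp : GG x y vx vy p = 1).
      { unfold GG. rewrite Hvy. rewrite (proj1 (uu_zero x y p Hup)).
        unfold uu in Hup. assert (Hrp : 0 < rr x y p) by (apply rr_pos; auto).
        replace (x p) with (- rr x y p) by lra. field. lra. }
      exists (e / 2). split. lra. intros s Hs.
      assert (Hncs : forall z, p <= z <= s -> ~ collides x y z).
      { intros z Hz. apply NC. pose proof (Rabs_def2). unfold p in Hz.
        apply Rabs_def1; lra. }
      assert (HGs : GG x y vx vy s = 1).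
      { rewrite <- HGp. apply const_int. unfold p; lra.
        intros z Hz. apply GG_deriv; auto. }
      destruct (uu_ge x y s) as [Hpos|]; auto. exfalso.
      assert (Hnc2 : ~ collides x y s) by (apply Hncs; unfold p; lra).
      pose proof (key_rel x y vx vy s Hnc2) as Hk. rewrite HGs in Hk.
      set (us := uu x y s) in *. set (hs := HH x y vx vy s) in *.
      assert (0 <= us * us * (2 * hs + us)).
      { replace (us * us * (2 * hs + us)) with (4 * us * ((1 - 1) / 2 + hs * us / 2 + us ^ 2 / 4)) by field.
        rewrite <- Hk. apply pow2_ge_0. }
      assert (0 <= 2 * hs + us).
      { destruct (Rle_or_lt 0 (2 * hs + us)); auto.
        assert (0 < us * us) by (apply Rmult_lt_0_compat; auto). nra. }
      apply (no_escape x y vx vy M s Ho HM Hpos). unfold us, hs in *. lra.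
  - lra.
Qed.

Lemma no_collision_contra x y vx vy : ode x y vx vy ->
  (forall t, y t = 0 /\ x t <= 0) -> (forall t, ~ collides x y t) -> False.
Proof.
  intros [_ Hd] Hax Hnc.
  assert (Hxneg : forall t, x t < 0).
  { intro t. destruct (Hax t) as [hy hx]. destruct hx as [|hx]; auto.
    exfalso. apply (Hnc t). split; auto. }
  assert (Hacc : forall t, 1 <= stark_ax (x t) (y t)).
  { intro t. unfold stark_ax. pose proof (Hxneg t).
    assert (0 < stark_r (x t) (y t)) by (apply (rr_pos x y t); auto).
    assert (0 < stark_r (x t) (y t) ^ 3) by (apply pow_lt; auto).
    assert (0 < - x t / stark_r (x t) (y t) ^ 3) by (apply Rdiv_lt_0_compat; lra). lra. }
  set (x0 := x 0). set (v0 := vx 0).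
  set (T := 2 * (Rabs v0 + Rabs x0 + 1)).
  assert (HT : 0 <= T) by (unfold T; pose proof (Rabs_pos v0); pose proof (Rabs_pos x0); lra).
  assert (Hv : forall s, 0 <= s -> s <= vx s - v0).
  { intros s Hs. pose proof (mvt_lb vx (fun z => stark_ax (x z) (y z)) 0 s 1 Hs).
    unfold v0. replace (s) with (1 * (s - 0)) at 1 by ring. apply H.
    intros z _. apply Hd; auto. intros z _. auto. }
  set (g := fun s => x s - (v0 * s + s * s / 2)).
  assert (Hg : 0 * (T - 0) <= g T - g 0).
  { apply (mvt_lb g (fun s => vx s - (v0 + s))); auto.
    - intros s Hs. unfold g. apply D_minus. apply Hd; auto.
      auto_derive; auto. field.
    - intros s Hs. specialize (Hv s (proj1 Hs)). lra. }
  unfold g in Hg. fold x0 in Hg.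
  pose proof (Hxneg T). pose proof (Rle_abs v0). pose proof (Rle_abs (- v0)).
  rewrite Rabs_Ropp in *. pose proof (Rle_abs (- x0)). rewrite Rabs_Ropp in *.
  assert (T * T / 2 = T * (Rabs v0 + Rabs x0 + 1)) by (unfold T; field).
  assert (- (Rabs v0) * T <= v0 * T) by (apply Rmult_le_compat_r; lra).
  assert (HT2 : 2 <= T) by (unfold T; pose proof (Rabs_pos v0); pose proof (Rabs_pos x0); lra).
  assert (2 * (Rabs x0 + 1) <= T * (Rabs x0 + 1)) by (apply Rmult_le_compat_r; [pose proof (Rabs_pos x0)|]; lra).
  replace (x 0 - (v0 * 0 + 0 * 0 / 2)) with x0 in Hg by (unfold x0; field).
  assert (x T >= x0 + v0 * T + T * T / 2) by lra.
  assert (T * (Rabs v0 + Rabs x0 + 1) = Rabs v0 * T + T * (Rabs x0 + 1)) by ring.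
  clearbody g T x0 v0. assert (x T >= x0 + T * (Rabs x0 + 1)) by lra. assert (H9 : x T >= x0 + 2 * (Rabs x0 + 1)) by (clear - H5 H8; lra). pose proof (Rabs_pos x0). clear - H H2 H9 H10. lra.
Qed.

Theorem corollary1p2 (x y : R -> R) :
  stark_solution x y -> bounded_orbit x y ->
  collision_ejection_neg_x_axis x y \/
  (forall t, stark_r (x t) (y t) <= 1).
Proof.
  intros [Hcont [[vx [vy Hd]] Hcoll]] [M HM].
  assert (Ho : ode x y vx vy) by (split; auto).
  assert (HM' : forall t, rr x y t <= M) by exact HM.
  destruct (classic (forall t, stark_r (x t) (y t) <= 1)) as [|Hn]; [right; auto | left].
  apply not_all_ex_not in Hn. destruct Hn as [t1 Ht1]. apply Rnot_le_lt in Ht1.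
  assert (HA : forall t, 1 < rr x y t -> uu x y t = 0).
  { intros t Ht. destruct (uu_ge x y t) as [Hp|]; auto. exfalso.
    assert (Hnc : ~ collides x y t) by (apply uu_pos_nc; auto).
    pose proof (hill x y vx vy t Hnc).
    assert (/ rr x y t < 1). { rewrite <- Rinv_1. apply Rinv_lt_contravar; lra. }
    apply (no_escape x y vx vy M t Ho HM' Hp). lra. }
  assert (Hc1 : continuity_pt (fun s => rr x y s - 1) t1).
  { apply continuity_pt_minus. eapply rr_cont; eauto. apply continuity_pt_const. intros a b; auto. }
  destruct (cont_pos_nbhd _ t1 Hc1 ltac:(unfold rr; lra)) as [d [Hdp Hd']].
  assert (Hnb : forall s, Rabs (s - t1) < d -> uu x y s = 0).
  { intros s Hs. apply HA. specialize (Hd' s Hs). lra. }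
  assert (Hfw : forall t, t1 <= t -> uu x y t = 0).
  { apply (forward_zero x y vx vy M t1 d Ho HM' Hcoll Hdp).
    intros s Hs. apply Hnb. apply Rabs_def1; lra. }
  assert (Hbw : forall t, - t1 <= t -> uu (rv x) (rv y) t = 0).
  { apply (forward_zero (rv x) (rv y) (rvv vx) (rvv vy) M (- t1) d).
    apply ode_rev; auto. intro s. rewrite rr_rev. auto. apply coll_rev; auto. auto.
    intros s Hs. rewrite uu_rev. apply Hnb. apply Rabs_def1; lra. }
  assert (Hall : forall t, uu x y t = 0).
  { intro t. destruct (Rle_or_lt t1 t). apply Hfw; auto.
    specialize (Hbw (- t) ltac:(lra)). rewrite uu_rev, Ropp_involutive in Hbw. auto. }
  assert (Hax : forall t, y t = 0 /\ x t <= 0) by (intro t; apply uu_zero; auto).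
  split; auto.
  apply NNPP. intro Hno. apply (no_collision_contra x y vx vy Ho Hax).
  intros t Hc. apply Hno. exists t. auto.
Qed.
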